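(* Let $n\ge 1$, let $\mathcal{C}$ be a set of conditions, let $\varnothing\notin\mathcal{C}$ denote the null condition, fix $c\in\mathcal{C}$, let $N=2^m$ with $m\ge 1$ an integer, and set $d=1/N$. Let $s:\mathbb{R}^n\times[0,1]\times(\mathcal{C}\cup\{\varnothing\})\times(0,1]\to\mathbb{R}^n$ be any function (the shortcut model), and for a real number $\omega$ define the guided output $$g^{\omega}(x,t,c,\delta)=\omega\, s(x,t,c,\delta)+(1-\omega)\, s(x,t,\varnothing,\delta).$$ Fix a guidance scale $w\in\mathbb{R}$ and points $y_0,y_1,\dots,y_N\in\mathbb{R}^n$, where $y_i$ is associated with time $i/N$. Assume the following ideal self-consistency conditions hold: for every $j\in\{0,1,\dots,m-1\}$ and every index $i\in\{0,\dots,N-1\}$ that is a multiple of $2^{j+1}$, $$s\!\left(y_i,\tfrac{i}{N},c,2^{j+1}d\right)=\tfrac12\Big[g^{w}\!\left(y_i,\tfrac{i}{N},c,2^{j}d\right)+g^{w}\!\left(y_{i+2^j},\tfrac{i+2^j}{N},c,2^{j}d\right)\Big],$$ $$s\!\left(y_i,\tfrac{i}{N},\varnothing,2^{j+1}d\right)=\tfrac12\Big[s\!\left(y_i,\tfrac{i}{N},\varnothing,2^{j}d\right)+s\!\left(y_{i+2^j},\tfrac{i+2^j}{N},\varnothing,2^{j}d\right)\Big].$$ Then the one-step output of size $Nd=1$ satisfies $$s(y_0,0,c,Nd)=\frac1N\sum_{i=0}^{N-1} g^{\,w^{\log_2 N}}\!\left(y_i,\tfrac{i}{N},c,d\right),$$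 i.e. it equals the average of the $N$ smallest-step guided outputs, but with the guidance scale compounded to $w^{\log_2 N}$.
   Context: This formalizes the ''accumulated guidance'' effect in shortcut models: a network $s(x,t,c,\delta)$ conditioned on a sample $x$, time $t$, condition $c$ (or null condition $\varnothing$) and step size $\delta$, trained with classifier-free guidance of fixed scale $w$ inside a self-consistency target (one step of size $2\delta$ equals the average of two consecutive guided steps of size $\delta$). The ''ideal'' assumptions above express that the self-consistency loss is exactly zero at the relevant points. In the paper the points are the trajectory $y_0=x_0$ (initial noise), $y_{i+1}=y_i+s(y_i,i/N,c,d)\,d$, but the identity holds for any fixed points satisfying the stated conditions. Note the guided output convention used here is $g^\omega=\omega s(\cdot,c,\cdot)+(1-\omega)s(\cdot,\varnothing,\cdot)$. *)

(* Defs.v *)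
From HB Require Import structures.
From mathcomp Require Import all_boot all_order all_algebra.
From mathcomp Require Import reals.
Set Implicit Arguments. Unset Strict Implicit. Unset Printing Implicit Defensive.
Import Order.TTheory GRing.Theory Num.Theory.
Local Open Scope ring_scope.

(* Conditions live in a type [Cond]; the extended condition set C ∪ {∅}
   is [option Cond], with [None] the null condition ∅ and [Some c] = c. *)

Definition guided (R : realType) (n : nat) (Cond : Type)
  (s : 'rV[R]_n -> R -> option Cond -> R -> 'rV[R]_n)
  (om : R) (x : 'rV[R]_n) (t : R) (c : Cond) (dl : R) : 'rV[R]_n :=
  om *: s x t (Some c) dl + (1 - om) *: s x t None dl.

(* Main.v *)
Require Import Defs.
From HB Require Import structures.
From mathcomp Require Import all_boot all_order all_algebra.
From mathcomp Require Import reals.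
From mathcomp Require Import ring lra.
Import Order.TTheory GRing.Theory Num.Theory.
Local Open Scope ring_scope.

Theorem proposition1 (R : realType) (n : nat) (hn : (1 <= n)%N)
  (Cond : Type) (c : Cond) (m : nat) (hm : (1 <= m)%N)
  (s : 'rV[R]_n -> R -> option Cond -> R -> 'rV[R]_n)
  (w : R) (y : nat -> 'rV[R]_n) :
  let N := (2 ^ m)%N in
  let d := (N%:R)^-1 : R in
  (forall j i : nat, (j < m)%N -> (i < N)%N -> (2 ^ j.+1 %| i)%N ->
     s (y i) (i%:R / N%:R) (Some c) ((2 ^ j.+1)%:R * d)
     = 2^-1 *: (guided s w (y i) (i%:R / N%:R) c ((2 ^ j)%:R * d)
               + guided s w (y (i + 2 ^ j)%N) ((i + 2 ^ j)%:R / N%:R) c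
                   ((2 ^ j)%:R * d))) ->
  (forall j i : nat, (j < m)%N -> (i < N)%N -> (2 ^ j.+1 %| i)%N ->
     s (y i) (i%:R / N%:R) None ((2 ^ j.+1)%:R * d)
     = 2^-1 *: (s (y i) (i%:R / N%:R) None ((2 ^ j)%:R * d)
               + s (y (i + 2 ^ j)%N) ((i + 2 ^ j)%:R / N%:R) None
                   ((2 ^ j)%:R * d))) ->
  s (y 0%N) 0 (Some c) (N%:R * d)
  = N%:R^-1 *: \sum_(i < N) guided s (w ^+ m) (y i) (i%:R / N%:R) c d.
Proof.
move=> N d hA hB.
pose a j i := s (y i) (i%:R / N%:R) (Some c) ((2^j)%:R * d).
pose b j i := s (y i) (i%:R / N%:R) None ((2^j)%:R * d).
have key : forall j, (j <= m)%N -> forall i, (2^j %| i)%N -> (i < N)%N ->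
  b j i = (2^j)%:R^-1 *: \sum_(i <= k < i + 2^j) b 0%N k /\
  a j i = (2^j)%:R^-1 *: \sum_(i <= k < i + 2^j)
            (w^+j *: a 0%N k + (1 - w^+j) *: b 0%N k).
  elim=> [|j IH] hj i hdiv hiN.
    rewrite expn0 invr1 !scale1r addn1 !big_nat1 expr0 scale1r subrr scale0r addr0.
    by split.
  have hjm : (j < m)%N by [].
  have hdj : (2^j %| i)%N := dvdn_trans (dvdn_exp2l 2 (leqnSn j)) hdiv.
  have hlt : (i + 2^j.+1 <= N)%N.
    have [q hq] := dvdnP hdiv; rewrite hq in hiN *; move: hiN.
    have -> : N = (2^(m - j.+1) * 2^j.+1)%N by rewrite -expnD subnK.
    rewrite -[X in (_ + X <= _)%N]mul1n -mulnDl leq_pmul2r ?expn_gt0 //.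
    by rewrite ltn_pmul2r ?expn_gt0 // addn1.
  have hi2 : (i + 2^j < N)%N.
    apply: leq_trans hlt; rewrite ltn_add2l ltn_exp2l //.
  have hd2 : (2^j %| i + 2^j)%N by rewrite dvdn_add.
  have [IHb1 IHa1] := IH (ltnW hj) i hdj hiN.
  have [IHb2 IHa2] := IH (ltnW hj) (i + 2^j)%N hd2 hi2.
  have split : forall F : nat -> 'rV[R]_n,
      \sum_(i <= k < i + 2^j.+1) F k =
      \sum_(i <= k < i + 2^j) F k + \sum_(i + 2^j <= k < i + 2^j + 2^j) F k.
    move=> F; rewrite -big_cat_nat ?leq_addr //.
    by rewrite -addnA addnn -mul2n -expnS.
  have e2 : (2^j.+1)%:R = 2 * (2^j)%:R :> R by rewrite expnS natrM.
  have nz : (2^j)%:R != 0 :> R by rewrite pnatr_eq0 expn_eq0.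
  split.
    rewrite /b hB // -/(b j i) -/(b j (i + 2^j)%N) IHb1 IHb2 split e2.
    rewrite /b /=; apply/rowP => k; rewrite !mxE invfM -mulrDr mulrA.
    reflexivity.
  rewrite /a hA // /guided -/(a j i) -/(a j (i + 2^j)%N) -/(b j i) -/(b j (i + 2^j)%N).
  rewrite IHb1 IHb2 IHa1 IHa2 split e2 !big_split /= -!scaler_sumr.
  rewrite /a /b /=.
  set X1 := (\sum_(i <= i0 < i + 2^j) _ : 'rV[R]_n).
  set X2 := (\sum_(i <= i0 < i + 2^j) _ : 'rV[R]_n).
  set X3 := (\sum_(i + 2^j <= i0 < i + 2^j + 2^j) _ : 'rV[R]_n).
  set X4 := (\sum_(i + 2^j <= i0 < i + 2^j + 2^j) _ : 'rV[R]_n).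
  apply/rowP => k; rewrite !mxE.
  move: nz; set J := (2^j)%:R => nz.
  rewrite exprS.
  field.
  by rewrite nz.
have [_ hm'] := key m (leqnn m) 0%N (dvdn0 _) (expn_gt0 2 m).
transitivity (a m 0%N); first by rewrite /a mul0r.
rewrite hm' add0n big_mkord; congr (_ *: _); apply: eq_bigr => i _.
by rewrite /guided /a /b expn0 mul1r.
Qed.
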